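(* Let $S$ be a $0$-left cancellative semigroup admitting least common multiples. Then for every open maximal string $\sigma$ in $S$, the map $\varphi_\sigma$ is an ultracharacter of $\mathfrak E(S)$.
   Context: $S$ has zero $0$, $S'=S\setminus\{0\}$; $0$-left cancellative: $st=sr\ne0\Rightarrow t=r$. $\tilde S=S\cup\{1\}$ ($1$ an adjoined identity); $s\mid t$ iff $t\in s\tilde S$; $r$ is a least common multiple of $s,t$ if $sS\cap tS=rS$, $s\mid r$, $t\mid r$; every pair has one. For $s\in S$: $F_s=\{x\in S':sx\ne0\}$, $E_s=sS\setminus\{0\}$, $\theta_s:F_s\to E_s$, $x\mapsto sx$. $\mathcal H(S)$ is the inverse semigroup of partial bijections of $S'$ generated by the $\theta_s$, and $\mathfrak E(S)=\{X\subseteq S':\mathrm{id}_X\in\mathcal H(S)\}$, a semilattice under $\cap$ with zero $\emptyset$. A string is a nonempty $\sigma\subseteq S$ with $0\notin\sigma$, closed under divisors, with any two elements having a common multiple in $\sigma$; maximal: not properly contained in another string; open: $\sigma=\{s\in S:\exists p\in S,\ sp\in\sigma\}$. For a string $\sigma$ and $X\in\mathfrak E(S)$ put $\varphi_\sigma(X)=1$ if for every $s\in\sigma$ there is $t\in\sigma\cap X$ with $s\mid t$, and $\varphi_\sigma(X)=0$ otherwise. A character of $\mathfrak E(S)$ is a nonzero map $\varphi:\mathfrak E(S)\to\{0,1\}$ with $\varphi(\emptyset)=0$ and $\varphi(X\cap Y)=\varphi(X)\varphi(Y)$; it is an ultracharacter if for every character $\psi$, $\varphi\le\psi$ pointwise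 implies $\varphi=\psi$. *)

(* Defs.v *)
(* semigroups with zero given by explicit carrier and operations.
   Subsets of S are predicates S -> Prop; the two-element set {0,1} is modelled by Prop. *)
Set Implicit Arguments.

Section Defs.
Variables (S : Type) (mul : S -> S -> S) (zero : S).

Definition divides (s t : S) : Prop := t = s \/ exists u, t = mul s u.

Definition zero_left_cancellative : Prop :=
  forall s t r, mul s t = mul s r -> mul s t <> zero -> t = r.

Definition is_lcm (s t r : S) : Prop :=
  (forall x, ((exists a, x = mul s a) /\ (exists b, x = mul t b)) <-> exists c, x = mul r c)
  /\ divides s r /\ divides t r.

Definition admits_lcm : Prop := forall s t, exists r, is_lcm s t r.

(* partial maps on S' represented by their graphs *)
Definition prel := S -> S -> Prop.

Definition theta (s : S) : prel := fun x y => x <> zero /\ mul s x <> zero /\ y = mul s x.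

(* words in the generators of the inverse semigroup H(S) *)
Inductive hword : Type :=
| HGen : S -> hword
| HComp : hword -> hword -> hword
| HInv : hword -> hword.

(* HComp w1 w2 = w1 o w2 (first apply w2, then w1) *)
Fixpoint hrel (w : hword) : prel :=
  match w with
  | HGen s => theta s
  | HComp w1 w2 => fun x z => exists y, hrel w2 x y /\ hrel w1 y z
  | HInv w1 => fun x y => hrel w1 y x
  end.

Definition inH (f : prel) : Prop :=
  exists w, forall x y, hrel w x y <-> f x y.

Definition idmap (X : S -> Prop) : prel := fun x y => x = y /\ X x.

Definition inE (X : S -> Prop) : Prop :=
  (forall x, X x -> x <> zero) /\ inH (idmap X).

Definition emptyset : S -> Prop := fun _ => False.
Definition inter (X Y : S -> Prop) : S -> Prop := fun x => X x /\ Y x.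

Definition character (phi : (S -> Prop) -> Prop) : Prop :=
  (forall X Y, inE X -> inE Y -> (forall x, X x <-> Y x) -> (phi X <-> phi Y)) /\
  (exists X, inE X /\ phi X) /\
  ~ phi emptyset /\
  (forall X Y, inE X -> inE Y -> (phi (inter X Y) <-> phi X /\ phi Y)).

Definition ultracharacter (phi : (S -> Prop) -> Prop) : Prop :=
  character phi /\
  forall psi, character psi ->
    (forall X, inE X -> phi X -> psi X) ->
    forall X, inE X -> (phi X <-> psi X).

Definition is_string (sigma : S -> Prop) : Prop :=
  (exists s, sigma s) /\
  ~ sigma zero /\
  (forall s t, sigma t -> divides s t -> sigma s) /\
  (forall s t, sigma s -> sigma t -> exists r, sigma r /\ divides s r /\ divides t r).

Definition maximal_string (sigma : S -> Prop) : Prop :=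
  is_string sigma /\
  forall tau, is_string tau -> (forall s, sigma s -> tau s) -> forall s, tau s -> sigma s.

Definition open_string (sigma : S -> Prop) : Prop :=
  forall s, sigma s <-> exists p, sigma (mul s p).

Definition phi_sigma (sigma : S -> Prop) (X : S -> Prop) : Prop :=
  forall s, sigma s -> exists t, sigma t /\ X t /\ divides s t.

End Defs.

(* Main.v *)
Require Import Defs.
From Stdlib Require Import List Classical.

Definition ap {S : Type} (mul : S -> S -> S) (u : option S) (y : S) : S :=
  match u with None => y | Some a => mul a y end.

Definition comp {S : Type} (mul : S -> S -> S) (c a : option S) : option S :=
  match c, a with
  | None, _ => a
  | Some c, None => Some c
  | Some c, Some a => Some (mul c a)
  end.

Lemma ap_comp {S} (mul : S -> S -> S)
  (Hassoc : forall a b c, mul a (mul b c) = mul (mul a b) c) c a y :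
  ap mul (comp mul c a) y = ap mul c (ap mul a y).
Proof. destruct c, a; simpl; auto. Qed.

Lemma ap_mul {S} (mul : S -> S -> S)
  (Hassoc : forall a b c, mul a (mul b c) = mul (mul a b) c) k y f :
  ap mul k (mul y f) = mul (ap mul k y) f.
Proof. destruct k; simpl; auto. Qed.

Lemma ap_nz {S} (mul : S -> S -> S) zero (Hzr : forall a, mul a zero = zero) k y :
  ap mul k y <> zero -> y <> zero.
Proof. destruct k; simpl; auto. intros H E; subst; apply H, Hzr. Qed.

Lemma ap_cancel {S} (mul : S -> S -> S) zero (Hcanc : zero_left_cancellative mul zero) u y y' :
  ap mul u y = ap mul u y' -> ap mul u y <> zero -> y = y'.
Proof. destruct u; simpl; auto. intros; eapply Hcanc; eauto. Qed.

Definition NF {S} (mul : S -> S -> S) zero u v cs (x z : S) : Prop :=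
  exists y, x = ap mul u y /\ z = ap mul v y /\ y <> zero /\ ap mul u y <> zero /\
    ap mul v y <> zero /\ (forall c, In c cs -> ap mul c y <> zero).

Lemma lcm_pair {S} (mul : S -> S -> S) zero
  (Hassoc : forall a b c, mul a (mul b c) = mul (mul a b) c)
  (Hcanc : zero_left_cancellative mul zero) (Hlcm : admits_lcm mul) (p q : option S) :
  exists a b, (forall c, ap mul p (ap mul a c) = ap mul q (ap mul b c)) /\
    (forall y2 y1, ap mul p y2 = ap mul q y1 -> ap mul p y2 <> zero ->
       exists c, y2 = ap mul a c /\ y1 = ap mul b c).
Proof.
  destruct p as [p|].
  - destruct q as [q|].
    + destruct (Hlcm p q) as [r [Hr [Dp Dq]]].
      assert (Ha : exists a, forall c, mul p (ap mul a c) = mul r c).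
      { destruct Dp as [E|[a E]]; [exists None|exists (Some a)]; intros; subst; simpl; auto. }
      assert (Hb : exists b, forall c, mul q (ap mul b c) = mul r c).
      { destruct Dq as [E|[b E]]; [exists None|exists (Some b)]; intros; subst; simpl; auto. }
      destruct Ha as [a Ha]; destruct Hb as [b Hb].
      exists a, b; split.
      * intros c; simpl; rewrite Ha, Hb; auto.
      * simpl; intros y2 y1 E NZ.
        destruct (proj1 (Hr (mul p y2))) as [c Ec].
        { split; eauto. }
        exists c; split.
        -- eapply Hcanc; [rewrite Ha; exact Ec| auto].
        -- eapply Hcanc; [rewrite Hb; rewrite <- E; exact Ec| rewrite <- E; auto].
    + exists None, (Some p); split; [intros; reflexivity|].
      simpl; intros y2 y1 E _; exists y2; auto.
  - exists q, None; split; [intros; reflexivity|].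
    simpl; intros y2 y1 E _; exists y1; auto.
Qed.

Lemma nf {S} (mul : S -> S -> S) zero
  (Hassoc : forall a b c, mul a (mul b c) = mul (mul a b) c)
  (Hzr : forall a, mul a zero = zero)
  (Hcanc : zero_left_cancellative mul zero) (Hlcm : admits_lcm mul) (w : hword S) :
  exists u v cs, forall x z, hrel mul zero w x z <-> NF mul zero u v cs x z.
Proof.
  induction w as [s| w1 IH1 w2 IH2 | w1 IH1].
  - exists None, (Some s), nil; intros x z; simpl; unfold theta, NF; simpl; split.
    + intros [H1 [H2 H3]]; exists x; intuition.
    + intros [y [E1 [E2 [H1 [H2 [H3 _]]]]]]; subst; auto.
  - destruct IH1 as [u1 [v1 [cs1 H1]]]; destruct IH2 as [u2 [v2 [cs2 H2]]].
    destruct (lcm_pair mul zero Hassoc Hcanc Hlcm v2 u1) as [a [b [Eab Hab]]].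
    exists (comp mul u2 a), (comp mul v1 b),
      (comp mul v2 a :: a :: b :: map (fun k => comp mul k a) cs2 ++ map (fun k => comp mul k b) cs1).
    intros x z; simpl; split.
    + intros [y [Hy2 Hy1]]. apply H2 in Hy2; apply H1 in Hy1.
      destruct Hy2 as [y2 [Ex [Ey [N2 [N2u [N2v C2]]]]]].
      destruct Hy1 as [y1 [Ey' [Ez [N1 [N1u [N1v C1]]]]]].
      destruct (Hab y2 y1) as [c [Ec2 Ec1]]; [congruence|congruence|].
      subst y2 y1.
      exists c; rewrite !ap_comp by auto; repeat split; auto.
      * eapply ap_nz; eauto.
      * intros k Hk; simpl in Hk; destruct Hk as [<-|[<-|[<-|Hk]]]; rewrite ?ap_comp by auto; auto.
        apply in_app_or in Hk; destruct Hk as [Hk|Hk]; apply in_map_iff in Hk;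
          destruct Hk as [k' [<- Hk']]; rewrite ap_comp by auto; auto.
    + intros [c [Ex [Ez [Nc [Nu [Nv C]]]]]].
      rewrite ap_comp in Nu, Nv, Ex, Ez by auto.
      assert (Ca : ap mul a c <> zero) by (apply C; simpl; auto).
      assert (Cb : ap mul b c <> zero) by (apply C; simpl; auto).
      assert (Cva : ap mul (comp mul v2 a) c <> zero) by (apply C; simpl; auto).
      rewrite ap_comp in Cva by auto.
      exists (ap mul v2 (ap mul a c)); split.
      * apply H2. exists (ap mul a c); repeat split; auto.
        intros k Hk. specialize (C (comp mul k a)). rewrite ap_comp in C by auto.
        apply C. simpl; right; right; right. apply in_or_app; left. apply (in_map (fun k => comp mul k a)); auto.
      * apply H1. exists (ap mul b c); rewrite <- Eab; repeat split; auto.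
        intros k Hk. specialize (C (comp mul k b)). rewrite ap_comp in C by auto.
        apply C. simpl; right; right; right. apply in_or_app; right. apply (in_map (fun k => comp mul k b)); auto.
  - destruct IH1 as [u [v [cs H]]]. exists v, u, cs; intros x z; simpl.
    rewrite H; unfold NF; split; intros [y Hy]; exists y; intuition.
Qed.

Lemma shape {S} (mul : S -> S -> S) zero
  (Hassoc : forall a b c, mul a (mul b c) = mul (mul a b) c)
  (Hzl : forall a, mul zero a = zero)
  (Hzr : forall a, mul a zero = zero)
  (Hcanc : zero_left_cancellative mul zero) (Hlcm : admits_lcm mul) X :
  inE mul zero X ->
  exists u (C : S -> Prop), (forall x, X x <-> exists y, x = ap mul u y /\ C y) /\
    (forall y f, C (mul y f) -> C y) /\ (forall y, C y -> ap mul u y <> zero).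
Proof.
  intros [_ [w Hw]].
  destruct (nf mul zero Hassoc Hzr Hcanc Hlcm w) as [u [v [cs H]]].
  exists u, (fun y => y <> zero /\ ap mul u y <> zero /\ ap mul v y <> zero /\
     (forall c, In c cs -> ap mul c y <> zero)).
  split; [|split].
  - intros x; split.
    + intros Hx. assert (Hi : idmap X x x) by (split; auto).
      apply Hw, H in Hi. destruct Hi as [y [E1 [E2 R]]]. exists y; auto.
    + intros [y [-> Cy]]. assert (Hn : NF mul zero u v cs (ap mul u y) (ap mul v y))
        by (exists y; intuition).
      apply H, Hw in Hn. destruct Hn; auto.
  - intros y f [N1 [N2 [N3 N4]]].
    assert (G : forall k, ap mul k (mul y f) <> zero -> ap mul k y <> zero).
    { intros k Hk E. rewrite ap_mul, E, Hzl in Hk by auto. auto. }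
    repeat split; auto.
    + intros E; subst; rewrite Hzl in N1; auto.
  - intros y [_ [N _]]; auto.
Qed.

Lemma convex {S} (mul : S -> S -> S) zero
  (Hassoc : forall a b c, mul a (mul b c) = mul (mul a b) c)
  (Hzl : forall a, mul zero a = zero)
  (Hzr : forall a, mul a zero = zero)
  (Hcanc : zero_left_cancellative mul zero) (Hlcm : admits_lcm mul) X a b c :
  inE mul zero X -> X a -> X c -> divides mul a b -> divides mul b c -> X b.
Proof.
  intros HE Ha Hc Dab Dbc.
  destruct Dab as [->|[e ->]]; auto.
  destruct Dbc as [->|[f ->]]; auto.
  destruct (shape mul zero Hassoc Hzl Hzr Hcanc Hlcm X HE) as [u [C [HX [Hd Hn]]]].
  apply HX in Ha; apply HX in Hc. apply HX.
  destruct Ha as [y0 [-> C0]]; destruct Hc as [y1 [E1 C1]].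
  rewrite <- !ap_mul in E1 by auto.
  apply (ap_cancel mul zero Hcanc) in E1; auto.
  - subst. exists (mul y0 e). rewrite ap_mul by auto. split; auto. eapply Hd; eauto.
  - rewrite E1; auto.
Qed.

Definition Et {S} (mul : S -> S -> S) zero (t : S) : S -> Prop :=
  fun x => exists y, y <> zero /\ mul t y <> zero /\ x = mul t y.

Lemma inE_Et {S} (mul : S -> S -> S) zero t : inE mul zero (Et mul zero t).
Proof.
  split.
  - intros x [y [_ [N ->]]]; auto.
  - exists (HComp (HGen t) (HInv (HGen t))). intros x z; simpl; unfold theta, idmap, Et; split.
    + intros [y [[H1 [H2 H3]] [H4 [H5 H6]]]]. subst; split; eauto.
    + intros [-> [y [H1 [H2 ->]]]]. exists y; repeat split; auto.
Qed.

Lemma inE_inter {S} (mul : S -> S -> S) zero X Y :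
  inE mul zero X -> inE mul zero Y -> inE mul zero (inter X Y).
Proof.
  intros [HX [wX HwX]] [HY [wY HwY]]. split.
  - intros x [Hx _]; auto.
  - exists (HComp wX wY); intros x z; simpl; split.
    + intros [y [Hy Hz]]. apply HwY in Hy; apply HwX in Hz. destruct Hy, Hz; subst.
      split; auto; split; auto.
    + intros [-> [Hx Hy]]. exists z; split; [apply HwY|apply HwX]; split; auto.
Qed.

Lemma inE_empty {S} (mul : S -> S -> S) zero (Hzl : forall a, mul zero a = zero) :
  inE mul zero (@emptyset S).
Proof.
  split. - intros x []. - exists (HGen zero). intros x z; simpl; unfold theta, idmap, emptyset.
  rewrite Hzl; split; [intros [_ [H _]]; tauto | intros [_ []]].
Qed.

Lemma char_mono {S} (mul : S -> S -> S) zero psi X Y :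
  character mul zero psi -> inE mul zero X -> inE mul zero Y -> (forall x, X x -> Y x) ->
  psi X -> psi Y.
Proof.
  intros [Hwd [_ [_ Hm]]] HX HY Hsub HpX.
  assert (psi (inter X Y)).
  { apply (proj1 (Hwd X (inter X Y) HX (inE_inter mul zero X Y HX HY) ltac:(firstorder))); auto. }
  apply Hm in H; tauto.
Qed.

Lemma div_trans {S} (mul : S -> S -> S)
  (Hassoc : forall a b c, mul a (mul b c) = mul (mul a b) c) a b c :
  divides mul a b -> divides mul b c -> divides mul a c.
Proof.
  intros [->|[e ->]] [->|[f ->]]; unfold divides.
  - left; auto.
  - right; eauto.
  - right; eauto.
  - right; exists (mul e f); auto.
Qed.

Lemma phi_Et {S} (mul : S -> S -> S) zero
  (Hassoc : forall a b c, mul a (mul b c) = mul (mul a b) c)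
  (Hzr : forall a, mul a zero = zero)
  sigma (Hs : is_string mul zero sigma) (Ho : open_string mul sigma) t :
  sigma t -> phi_sigma mul sigma (Et mul zero t).
Proof.
  intros Ht r Hr. destruct Hs as [_ [Hz [Hdc Hcm]]].
  destruct (Hcm r t Hr Ht) as [m [Hm [Drm Dtm]]].
  destruct (proj1 (Ho m) Hm) as [p Hp].
  assert (Dmp : divides mul m (mul m p)) by (right; eauto).
  exists (mul m p); split; auto; split.
  - assert (Nz : mul m p <> zero) by (intros E; rewrite E in Hp; auto).
    destruct Dtm as [->|[e ->]].
    + exists p; repeat split; auto. intros E; subst; apply Nz, Hzr.
    + exists (mul e p); rewrite Hassoc; repeat split; auto.
      intros E; apply Nz; rewrite <- Hassoc, E; apply Hzr.
  - eapply div_trans; eauto.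
Qed.

Theorem theorem16p18 (S : Type) (mul : S -> S -> S) (zero : S)
  (Hassoc : forall a b c, mul a (mul b c) = mul (mul a b) c)
  (Hzl : forall a, mul zero a = zero)
  (Hzr : forall a, mul a zero = zero)
  (Hcanc : zero_left_cancellative mul zero)
  (Hlcm : admits_lcm mul)
  (sigma : S -> Prop)
  (Hmax : maximal_string mul zero sigma)
  (Hopen : open_string mul sigma) :
  ultracharacter mul zero (phi_sigma mul sigma).
Proof.
  destruct Hmax as [Hs Hmaxp].
  pose proof Hs as [[s0 Hs0] [Hz0 [Hdc Hcm]]].
  assert (Hchar : character mul zero (phi_sigma mul sigma)).
  { split; [|split; [|split]].
    - intros X Y _ _ H; unfold phi_sigma; split; intros P s Hs';
        destruct (P s Hs') as [t [Ht [HXt D]]]; exists t; repeat split; auto; apply H; auto.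
    - exists (Et mul zero s0); split; [apply inE_Et | apply phi_Et; auto].
    - intros P; destruct (P s0 Hs0) as [t [_ [[] _]]].
    - intros X Y HX HY; split.
      + intros P; split; intros r Hr; destruct (P r Hr) as [t [Ht [[HXt HYt] D]]]; eauto.
      + intros [PX PY] r Hr.
        destruct (PX r Hr) as [t1 [H1 [X1 D1]]].
        destruct (PY t1 H1) as [t2 [H2 [Y2 D2]]].
        destruct (PX t2 H2) as [t3 [H3 [X3 D3]]].
        exists t2; split; auto; split.
        * split; auto. eapply (convex mul zero Hassoc Hzl Hzr Hcanc Hlcm X t1 t2 t3); eauto.
        * eapply div_trans; eauto. }
  split; auto.
  intros psi Hpsi Hle X HX; split; [apply Hle; auto|]. intros HpX.
  pose proof Hpsi as [Hwd [_ [Hne Hm]]].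
  assert (HEt : forall t, sigma t -> psi (Et mul zero t)).
  { intros t Ht; apply Hle; [apply inE_Et | apply phi_Et; auto]. }
  set (tau := fun r => psi (Et mul zero r)).
  assert (Htau : is_string mul zero tau).
  { split; [|split; [|split]].
    - exists s0; apply HEt; auto.
    - intros H; apply Hne.
      apply (proj1 (Hwd _ _ (inE_Et mul zero zero) (inE_empty mul zero Hzl) ltac:(
        intros x; unfold Et, emptyset; split; [intros [y [_ [N _]]]; apply N, Hzl | intros []]))); auto.
    - intros s t Ht [->|[e ->]]; auto.
      apply (char_mono mul zero psi (Et mul zero (mul s e))); auto using inE_Et.
      intros x [y [Ny [Nse ->]]]. exists (mul e y); rewrite <- Hassoc in Nse |- *.
      repeat split; auto. intros E; rewrite E, Hzr in Nse; auto.
    - intros s t Hst Htt.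
      assert (Hi : psi (inter (Et mul zero s) (Et mul zero t)))
        by (apply Hm; auto using inE_Et).
      destruct (Hlcm s t) as [r [Hr [Dsr Dtr]]].
      exists r; split; auto.
      enough (Heq : forall x, inter (Et mul zero s) (Et mul zero t) x <-> Et mul zero r x).
      { apply (proj1 (Hwd _ _ (inE_inter mul zero _ _ (inE_Et mul zero s) (inE_Et mul zero t))
         (inE_Et mul zero r) Heq)); auto. }
      intros x; split.
      + intros [[a [Na [Nsa Ea]]] [b [Nb [Ntb Eb]]]].
        destruct (proj1 (Hr x)) as [c Ec]; [split; eauto|].
        subst x. exists c; split; [|split].
        * intros E; subst c; rewrite Hzr in Ec; auto.
        * rewrite <- Ec; auto.
        * auto.
      + intros [c [Nc [Nrc Ex]]].
        assert (Hx : exists c, x = mul r c) by eauto.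
        apply Hr in Hx. destruct Hx as [[a Ea] [b Eb]].
        split.
        * exists a; split; [|split]; [|congruence|auto].
          intros E; subst a; rewrite Hzr in Ea; congruence.
        * exists b; split; [|split]; [|congruence|auto].
          intros E; subst b; rewrite Hzr in Eb; congruence. }
  assert (Hsub : forall r, tau r -> sigma r).
  { apply Hmaxp; [exact Htau| intros s1 Hs1; apply HEt; auto]. }
  destruct (shape mul zero Hassoc Hzl Hzr Hcanc Hlcm X HX) as [u [C [HXe [Hd Hn]]]].
  intros s Hsig.
  assert (Hk : exists t k, sigma t /\ t = ap mul u k /\ divides mul s t).
  { destruct u as [u0|].
    - assert (Hu0 : sigma u0).
      { apply Hsub. apply (char_mono mul zero psi X); auto using inE_Et.
        intros x Hx. apply HXe in Hx. destruct Hx as [y [-> Cy]].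
        specialize (Hn y Cy); simpl in Hn. exists y; repeat split; auto.
        intros E; subst; apply Hn, Hzr. }
      destruct (Hcm s u0 Hsig Hu0) as [m [Hm' [Dsm Dum]]].
      destruct (proj1 (Hopen m) Hm') as [p Hp].
      exists (mul m p).
      destruct Dum as [->|[e ->]].
      + exists p; repeat split; auto. eapply div_trans; eauto. right; eauto.
      + exists (mul e p); simpl; rewrite Hassoc; repeat split; auto.
        eapply div_trans; eauto. right; eauto.
    - destruct (proj1 (Hopen s) Hsig) as [p Hp].
      exists (mul s p), (mul s p); repeat split; auto. right; eauto. }
  destruct Hk as [t [k [Ht [Etk Dst]]]].
  destruct (classic (C k)) as [Ck|nCk].
  - exists t; repeat split; auto. apply HXe; eauto.
  - exfalso. apply Hne.
    assert (Hi : psi (inter X (Et mul zero t))) by (apply Hm; auto using inE_Et).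
    enough (Heq : forall x, inter X (Et mul zero t) x <-> emptyset x).
    { apply (proj1 (Hwd _ _ (inE_inter mul zero _ _ HX (inE_Et mul zero t)) (inE_empty mul zero Hzl)
       Heq)); auto. }
    intros x; split; [|intros []].
    intros [Hx [w [Nw [Ntw Ex]]]].
    apply HXe in Hx. destruct Hx as [y [Ey Cy]].
    apply nCk. apply (Hd k w).
    assert (y = mul k w).
    { apply (ap_cancel mul zero Hcanc u).
      - rewrite ap_mul by auto. rewrite <- Etk, <- Ex; auto.
      - apply Hn; auto. }
    subst; auto.
Qed.
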